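(* For all $m\ge2$ (and all $n$, with the convention below), $$A_{n,m}(u,v)=B_{n-1,m}(uv)+A_{n-1,m}(1,v)+A_{n-2,m-1}(1,uv)+\frac{uv}{1-uv}\Big(A_{n-1,m-1}(1,uv)-(uv)^mA_{n-1,m-1}(1,1)\Big)$$ and $$B_{n,m}(v)=B_{n-1,m}(v)+A_{n-2,m-1}(1,v)+\frac{v}{1-v}\Big(A_{n-1,m-1}(1,v)-v^mA_{n-1,m-1}(1,1)\Big).$$
   Context: An ascent sequence of length $n$ is a sequence $x_1\cdots x_n$ of non-negative integers with $x_1=0$ and $x_i\le \mathrm{asc}(x_1\cdots x_{i-1})+1$ for $1<i\le n$, where $\mathrm{asc}$ counts ascents (indices $j$ with $x_j<x_{j+1}$). It avoids $021$ if there are no $i<j<k$ with $x_i<x_k<x_j$. For $n\ge1$, $0\le s\le r\le m<n$, let $a_{n,m,r,s}$ be the number of $021$-avoiding ascent sequences of length $n$ with exactly $m$ ascents, largest letter $r$ and last letter $s$. Define $A_{n,m,r}(u)=\sum_{s=0}^r a_{n,m,r,s}u^s$, $A_{n,m}(u,v)=\sum_{r=0}^m A_{n,m,r}(u)v^r$, and $B_{n,m}(v)=\sum_{r=0}^m a_{n,m,r,r}v^r$ for $n>m\ge0$, with all these polynomials taken to be $0$ when $n\le m$ or $n<1$. (The quotients by $1-uv$ and $1-v$ are polynomials.) *)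

(* Defs.v *)
From HB Require Import structures.
From mathcomp Require Import all_boot all_order all_algebra.
Set Implicit Arguments. Unset Strict Implicit. Unset Printing Implicit Defensive.
Import Order.TTheory GRing.Theory Num.Theory.

Definition asc (x : seq nat) : nat :=
  \sum_(j < (size x).-1) (nth 0 x j < nth 0 x j.+1).

Definition is_ascent_seq (x : seq nat) : bool :=
  (0 < size x) && (nth 0 x 0 == 0) &&
  [forall i : 'I_(size x), (0 < i) ==> (nth 0 x i <= (asc (take i x)).+1)].

Definition avoids021 (x : seq nat) : bool :=
  [forall i : 'I_(size x), forall j : 'I_(size x), forall k : 'I_(size x),
     ~~ [&& (i < j)%N, (j < k)%N, nth 0 x i < nth 0 x k & nth 0 x k < nth 0 x j]].

Definition max_letter (x : seq nat) : nat := foldr maxn 0 x.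

(* a_{n,m,r,s}.  Every ascent sequence of length n has letters < n, so it
   suffices to enumerate n-tuples over 'I_n. *)
Definition a_cnt (n m r s : nat) : nat :=
  #|[set t : n.-tuple 'I_n |
     let x := map val t in
     [&& is_ascent_seq x, avoids021 x, asc x == m,
         max_letter x == r & last 0 x == s]]|.

Local Open Scope ring_scope.

Definition A_ev (R : comRingType) (n m : nat) (u v : R) : R :=
  if (m < n)%N then
    \sum_(r < m.+1) \sum_(s < r.+1) (a_cnt n m r s)%:R * u ^+ s * v ^+ r
  else 0.

Definition B_ev (R : comRingType) (n m : nat) (v : R) : R :=
  if (m < n)%N then \sum_(r < m.+1) (a_cnt n m r r)%:R * v ^+ r else 0.

(* Main.v *)
Require Import Defs.
From HB Require Import structures.
From mathcomp Require Import all_boot all_order all_algebra.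
From mathcomp Require Import zify ring.
Import GRing.Theory.

Notation mx := max_letter.

Lemma mx_cons a l : mx (a :: l) = maxn a (mx l).
Proof. by []. Qed.

Lemma mx_rcons y t : mx (rcons y t) = maxn (mx y) t.
Proof.
elim: y => [|a l IH] /=; first by rewrite maxn0 max0n.
by rewrite -/(mx (rcons l t)) IH maxnA.
Qed.

Lemma nth_le_mx y i : nth 0 y i <= mx y.
Proof.
elim: y i => [|a l IH] [|i] //=; first by rewrite leq_maxl.
by rewrite (leq_trans (IH i)) // leq_maxr.
Qed.

Lemma last_le_mx y : last 0 y <= mx y.
Proof. by rewrite -nth_last nth_le_mx. Qed.

Lemma mx_attained y : 0 < mx y -> exists2 j, j < size y & nth 0 y j = mx y.
Proof.
elim: y => [|a l IH] //= Hp.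
case: (leqP (mx l) a) => H.
  by exists 0 => //; rewrite /= (maxn_idPl H).
have /IH [j Hj Ej] : 0 < mx l by case: (mx l) H.
by exists j.+1 => //; rewrite /= Ej (maxn_idPr (ltnW H)).
Qed.

Lemma asc_le y : asc y <= (size y).-1.
Proof.
rewrite /asc -[X in _ <= X]card_ord -sum1_card.
by apply: leq_sum => j _; exact: leq_b1.
Qed.

Lemma asc_rcons y t : y != [::] -> asc (rcons y t) = asc y + (last 0 y < t).
Proof.
case: y => [|a l] // _.
rewrite /asc size_rcons /= big_ord_recr /=; congr addn.
  apply: eq_bigr => j _ /=.
  have Hj : j < size l := ltn_ord j.
  by rewrite -rcons_cons !nth_rcons /= ltnS (ltnW Hj) Hj.
rewrite -rcons_cons !nth_rcons /= ltnSn ltnn eqxx.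
by rewrite -[size l]/((size (a::l)).-1) nth_last.
Qed.

Lemma mx0_asc y : mx y = 0 -> asc y = 0.
Proof.
move=> H; rewrite /asc big1 // => j _.
by have := nth_le_mx y j.+1; rewrite H leqn0 => /eqP ->.
Qed.

Lemma forall_recr k (P : nat -> bool) :
  [forall i : 'I_k.+1, P i] = [forall i : 'I_k, P i] && P k.
Proof.
apply/forallP/andP => [H|[H1 H2] i].
  split; last exact: (H ord_max).
  by apply/forallP => i; exact: (H (widen_ord (leqnSn k) i)).
case: (ltnP i k) => Hi; first exact: (forallP H1 (Ordinal Hi)).
have -> : nat_of_ord i = k by have := ltn_ord i; lia.
exact: H2.
Qed.

Lemma isasc_rcons y t : y != [::] ->
  is_ascent_seq (rcons y t) = is_ascent_seq y && (t <= (asc y).+1).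
Proof.
move=> Hy; have Hs : 0 < size y by rewrite lt0n size_eq0.
rewrite /is_ascent_seq size_rcons.
rewrite (forall_recr (size y) (fun i => (0 < i) ==> (nth 0 (rcons y t) i <= (asc (take i (rcons y t))).+1))).
rewrite Hs /= (nth_rcons _ _ _ (size y)) ltnn eqxx -cats1 take_size_cat //.
rewrite nth_cat Hs.
rewrite andbA; congr (_ && _ && _).
apply: eq_forallb => i /=.
by rewrite nth_cat ltn_ord takel_cat // ltnW.
Qed.

Lemma avoidP x : reflect (forall i j k, i < j -> j < k -> k < size x ->
   ~~ ((nth 0 x i < nth 0 x k) && (nth 0 x k < nth 0 x j))) (avoids021 x).
Proof.
apply: (iffP idP).
  move=> H i j k Hij Hjk Hk.
  have Hj : j < size x by apply: ltn_trans Hk.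
  have Hi : i < size x by apply: ltn_trans Hj.
  move/forallP: H => /(_ (Ordinal Hi)) /forallP /(_ (Ordinal Hj)) /forallP /(_ (Ordinal Hk)) /=.
  by rewrite Hij Hjk.
move=> H; apply/forallP => i; apply/forallP => j; apply/forallP => k.
apply/negP => /and4P [Hij Hjk H1 H2].
by move: (H i j k Hij Hjk (ltn_ord k)); rewrite H1 H2.
Qed.

Definition valid x := is_ascent_seq x && avoids021 x.

Lemma valid_prefix y t : y != [::] -> valid (rcons y t) -> valid y.
Proof.
move=> Hy /andP [Ha Hb]; rewrite /valid.
move: Ha; rewrite isasc_rcons // => /andP [-> _] /=.
apply/avoidP => i j k Hij Hjk Hk.
move/avoidP: Hb => /(_ i j k Hij Hjk); rewrite size_rcons ltnS ltnW //.
have Hj : j < size y by apply: ltn_trans Hk.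
have Hi : i < size y by apply: ltn_trans Hj.
by rewrite !nth_rcons Hi Hj Hk => /(_ isT).
Qed.

Lemma asc_nth0 x : is_ascent_seq x -> nth 0 x 0 = 0.
Proof. by case/andP => /andP [_ /eqP]. Qed.

Lemma valid_rcons y t : y != [::] -> valid y ->
  valid (rcons y t) = ((t == 0) || (mx y <= t)) && (t <= (asc y).+1).
Proof.
move=> Hy /andP [Ha Hb]; have Hs : 0 < size y by rewrite lt0n size_eq0.
rewrite /valid isasc_rcons // Ha /= andbC; congr (_ && _).
apply/idP/idP.
  move/avoidP => H; apply/negPn/negP; rewrite negb_or -ltnNge => /andP [Ht Hlt].
  have [j Hj Ej] : exists2 j, j < size y & nth 0 y j = mx y.
    by apply: mx_attained; move: Hlt; case: (mx y).
  have Hj0 : 0 < j.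
    case: j Hj Ej => // _ E0.
    by move: Hlt; rewrite -E0 (@asc_nth0 y Ha).
  move: (H 0 j (size y) Hj0 Hj); rewrite size_rcons ltnSn => /(_ isT).
  rewrite !nth_rcons Hs Hj ltnn eqxx asc_nth0 // Ej.
  by rewrite lt0n Ht Hlt.
move=> Ht; apply/avoidP => i j k Hij Hjk Hk.
have Hj : j < size y by rewrite size_rcons ltnS in Hk; exact: leq_trans Hjk Hk.
have Hi : i < size y by apply: ltn_trans Hj.
rewrite !nth_rcons Hi Hj.
case: (ltnP k (size y)) => Hk'.
  by move/avoidP: Hb => /(_ i j k Hij Hjk Hk').
have -> : (k == size y) by rewrite eqn_leq Hk'; rewrite size_rcons ltnS in Hk; rewrite Hk.
case/orP: Ht => [/eqP -> // | Ht].
by rewrite negb_and; apply/orP; right; rewrite -leqNgt; exact: leq_trans (nth_le_mx y j) Ht.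
Qed.

Lemma mx_le_asc x : is_ascent_seq x -> mx x <= asc x.
Proof.
elim/last_ind: x => [|y t IH] // H.
case: (eqVneq y [::]) => [Ey|Hy].
  subst y; move: (asc_nth0 _ H) => /= ->.
  by rewrite /asc big_ord0.
move: H; rewrite isasc_rcons // => /andP [Hy' Ht].
rewrite mx_rcons asc_rcons // geq_max.
have H1 := IH Hy'; have H2 := last_le_mx y.
case: (ltnP (last 0 y) t) => H3 /=.
  by rewrite addn1 Ht (leq_trans H1).
by rewrite addn0 H1 (leq_trans H3 (leq_trans H2 H1)).
Qed.

Lemma mem_le_mx x a : a \in x -> a <= mx x.
Proof. by move=> Ha; rewrite -(nth_index 0 Ha) nth_le_mx. Qed.

Lemma valid1 a : valid [:: a] = (a == 0).
Proof.
rewrite /valid.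
have -> : avoids021 [:: a].
  apply/avoidP => i j k Hij Hjk; rewrite /= ltnS leqn0 => /eqP Hk.
  by rewrite Hk in Hjk.
rewrite /is_ascent_seq /= andbT.
have -> : [forall i : 'I_1, (0 < i) ==> (nth 0 [:: a] i <= (asc (take i [:: a])).+1)].
  by apply/forallP => i; rewrite (ord1 i).
by rewrite andbT.
Qed.

Definition ch (y : seq nat) : seq nat :=
  0 :: iota (maxn 1 (mx y)) ((asc y).+2 - maxn 1 (mx y)).

Fixpoint V (n : nat) : seq (seq nat) :=
  match n with
  | 0 => [::]
  | n'.+1 => if n' is 0 then [:: [:: 0]] else [seq rcons y t | y <- V n', t <- ch y]
  end.

Lemma mem_ch y t : mx y <= asc y ->
  (t \in ch y) = ((t == 0) || (mx y <= t)) && (t <= (asc y).+1).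
Proof.
move=> H; rewrite inE mem_iota.
case: (eqVneq t 0) => [->|Ht] //=.
have -> : maxn 1 (mx y) + ((asc y).+2 - maxn 1 (mx y)) = (asc y).+2 by lia.
apply/andP/andP => [] [H1 H2]; split; lia.
Qed.

Lemma valid_ne x : valid x -> x != [::].
Proof. by case: x. Qed.

Lemma memV n x : (x \in V n) = valid x && (size x == n).
Proof.
elim: n x => [|n IH] x.
  by case: x => [|a l]; [rewrite /valid /is_ascent_seq | rewrite andbF].
case: n IH => [|n] IH.
  case: x => [|a [|b l]] //=.
    by rewrite inE valid1 eqseq_cons !andbT.
  by rewrite andbF inE eqseq_cons /= andbF.
apply/allpairsPdep/andP => [[y [t [Hy Ht ->]]]|[Hv Hs]].
  move: Hy; rewrite IH => /andP [Hvy /eqP Hsy].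
  have Hne := valid_ne _ Hvy.
  rewrite valid_rcons // -mem_ch ?Ht; last by case/andP: Hvy => /mx_le_asc.
  by rewrite size_rcons Hsy.
move: Hv Hs; case/lastP: x => [|y t] // Hv; rewrite size_rcons eqSS => Hs.
have Hne : y != [::] by case: y Hv Hs.
have Hvy := valid_prefix _ _ Hne Hv.
exists y, t; split => //; first by rewrite IH Hvy.
rewrite mem_ch; last by case/andP: Hvy => /mx_le_asc.
by rewrite -valid_rcons.
Qed.

Lemma uniq_ch y : uniq (ch y).
Proof.
rewrite /= iota_uniq andbT mem_iota negb_and; apply/orP; left.
by rewrite -ltnNge leq_maxl.
Qed.

Lemma uniqV n : uniq (V n).
Proof.
elim: n => [|[|n] IH] //.
change (uniq [seq rcons y t | y <- V n.+1, t <- ch y]).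
apply: allpairs_uniq_dep => //; first by move=> y _; exact: uniq_ch.
move=> [y1 t1] [y2 t2] _ _ /= /rcons_inj [-> ->] //.
Qed.

Lemma pmap_insub_ord n (x : seq nat) : all (fun a => a < n) x ->
  map val (pmap (insub : nat -> option 'I_n) x) = x.
Proof.
elim: x => [|a l IH] //= /andP [Ha Hl].
by rewrite insubT /= IH.
Qed.

Lemma card_V n (P : pred (seq nat)) : (forall x, P x -> valid x) ->
  #|[set t : n.-tuple 'I_n | P (map val t)]| = count P (V n).
Proof.
move=> HP.
pose f := fun t : n.-tuple 'I_n => map val (val t).
have finj : injective f.
  by move=> t1 t2 /(inj_map val_inj) /val_inj.
set A := [set t : n.-tuple 'I_n | P (map val t)].
rewrite (cardE A). rewrite -(size_map f (enum A)). rewrite -size_filter.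
apply: perm_size; apply: uniq_perm.
- by rewrite (map_inj_uniq finj) enum_uniq.
- by rewrite filter_uniq // uniqV.
move=> x; rewrite mem_filter memV.
apply/mapP/idP => [[t Ht ->]|].
  move: Ht; rewrite mem_enum inE => Ht.
  by rewrite Ht HP //= /f size_map size_tuple.
case/andP => Hx /andP [Hv /eqP Hs].
have Hb : all (fun a => a < n) x.
  apply/allP => a Ha.
  have H1 : a <= (size x).-1 := leq_trans (mem_le_mx _ _ Ha) (leq_trans (mx_le_asc _ (proj1 (andP Hv))) (asc_le x)).
  have H2 : 0 < size x by rewrite lt0n size_eq0; apply/eqP => E; rewrite E in Ha.
  rewrite -Hs; move: H1 H2; case: (size x) => // k; rewrite /= ltnS; done.
have Hm := pmap_insub_ord _ _ Hb.
have Hsz : size (pmap (insub : nat -> option 'I_n) x) == n.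
  by rewrite -(size_map val) Hm Hs.
exists (Tuple Hsz); last by rewrite /f /= Hm.
by rewrite mem_enum inE /= Hm.
Qed.

Local Open Scope ring_scope.

Lemma natr_count (R : comRingType) (T : Type) (a : pred T) (s : seq T) :
  (count a s)%:R = \sum_(x <- s) (a x)%:R :> R.
Proof.
elim: s => [|y s IH]; first by rewrite big_nil.
by rewrite big_cons /= natrD IH.
Qed.

Lemma sum_delta (R : comRingType) n (k : nat) (G : nat -> R) :
  \sum_(r < n) ((k == (r : nat))%:R * G r) = if (k < n)%N then G k else 0.
Proof.
elim: n => [|n IH]; first by rewrite big_ord0.
rewrite big_ord_recr /= IH.
case: (ltngtP k n) => H.
- by rewrite ltnS ltnW // mul0r addr0.
- by rewrite ltnS leqNgt H /= mul0r addr0.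
- by rewrite H ltnSn mul1r add0r.
Qed.

Lemma a_cntE n m r s :
  a_cnt n m r s = count (fun x => [&& asc x == m, mx x == r & last 0 x == s]) (V n).
Proof.
rewrite /a_cnt.
transitivity (count (fun x => [&& is_ascent_seq x, avoids021 x, asc x == m,
         max_letter x == r & last 0 x == s]) (V n)).
  by apply: card_V => x /and3P [H1 H2 _]; rewrite /valid H1 H2.
apply: eq_in_count => x; rewrite memV => /andP [/andP [H1 H2] _].
by rewrite H1 H2.
Qed.

Lemma asc_lt_size n x : x \in V n -> (asc x < n)%N.
Proof.
rewrite memV => /andP [Hv /eqP <-].
have H2 : (0 < size x)%N by rewrite lt0n size_eq0; exact: valid_ne.
move: (asc_le x) H2; case: (size x) => // k; rewrite ltnS; done.
Qed.

Lemma A_W (R : comRingType) n m (u v : R) :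
  A_ev n m u v = \sum_(x <- V n) (asc x == m)%:R * (u ^+ last 0 x * v ^+ mx x).
Proof.
rewrite /A_ev; case: ltnP => Hmn; last first.
  symmetry; apply: big1_seq => x Hx.
  have := asc_lt_size _ _ Hx => H.
  have -> : (asc x == m) = false by apply/negbTE; rewrite neq_ltn (leq_trans H Hmn).
  by rewrite mul0r.
transitivity (\sum_(r < m.+1) \sum_(s < r.+1) \sum_(x <- V n)
   ([&& asc x == m, mx x == r & last 0 x == s])%:R * u ^+ s * v ^+ r).
  apply: eq_bigr => r _; apply: eq_bigr => s _.
  by rewrite a_cntE natr_count !mulr_suml.
transitivity (\sum_(r < m.+1) \sum_(x <- V n) \sum_(s < r.+1)
   ([&& asc x == m, mx x == r & last 0 x == s])%:R * u ^+ s * v ^+ r).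
  by apply: eq_bigr => r _; rewrite exchange_big.
rewrite exchange_big; apply: eq_big_seq => x; rewrite memV => /andP [/andP [Hv1 Hv2] _].
case: (eqVneq (asc x) m) => Ha; last first.
  rewrite mul0r; apply: big1 => r _; apply: big1 => s _.
  by rewrite /= !mul0r.
transitivity (\sum_(r < m.+1) ((mx x == r)%:R *
    (v ^+ r * \sum_(s < r.+1) ((last 0 x == s)%:R * u ^+ s)))).
  apply: eq_bigr => r _; rewrite !mulr_sumr; apply: eq_bigr => s _.
  rewrite /= -mulnb natrM; ring.
have Hm : (mx x <= asc x)%N := mx_le_asc _ Hv1.
rewrite (sum_delta _ _ _ (fun r => v ^+ r * \sum_(s < r.+1) ((last 0 x == s)%:R * u ^+ s))).
rewrite ltnS -Ha Hm (sum_delta _ _ _ (fun s => u ^+ s)) ltnS last_le_mx.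
by rewrite mul1r mulrC.
Qed.

Lemma B_W (R : comRingType) n m (v : R) :
  B_ev n m v = \sum_(x <- V n) ((asc x == m) && (last 0 x == mx x))%:R * v ^+ mx x.
Proof.
rewrite /B_ev; case: ltnP => Hmn; last first.
  symmetry; apply: big1_seq => x Hx.
  have := asc_lt_size _ _ Hx => H.
  have -> : (asc x == m) = false by apply/negbTE; rewrite neq_ltn (leq_trans H Hmn).
  by rewrite mul0r.
transitivity (\sum_(r < m.+1) \sum_(x <- V n)
   ([&& asc x == m, mx x == r & last 0 x == r])%:R * v ^+ r).
  apply: eq_bigr => r _.
  by rewrite a_cntE natr_count !mulr_suml.
rewrite exchange_big; apply: eq_big_seq => x; rewrite memV => /andP [/andP [Hv1 Hv2] _].
transitivity (((asc x == m) && (last 0 x == mx x))%:R *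
   \sum_(r < m.+1) ((mx x == r)%:R * v ^+ r)).
  rewrite mulr_sumr; apply: eq_bigr => r _.
  have -> : [&& asc x == m, mx x == r & last 0 x == r] =
     ((asc x == m) && (last 0 x == mx x)) && (mx x == r).
    by case: (eqVneq (mx x) r) => [<-|_]; rewrite ?andbT ?andbF.
  by rewrite -mulnb natrM mulrA.
rewrite (sum_delta _ _ _ (fun r => v ^+ r)); case: (eqVneq (asc x) m) => Ha /=; last by rewrite !mul0r.
have Hm : (mx x <= asc x)%N := mx_le_asc _ Hv1.
by rewrite ltnS -Ha Hm.
Qed.

Lemma sumV_rec (R : comRingType) k (F : seq nat -> R) :
  \sum_(x <- V k.+2) F x = \sum_(y <- V k.+1) (F (rcons y 0%N) +
     \sum_(t <- iota (maxn 1 (mx y)) ((asc y).+2 - maxn 1 (mx y))) F (rcons y t)).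
Proof.
have -> : V k.+2 = [seq rcons y t | y <- V k.+1, t <- ch y] by [].
by rewrite big_allpairs_dep; apply: eq_bigr => y _; rewrite big_cons.
Qed.

Lemma per_y (R : comRingType) (a : R) (m m' r' s' : nat) :
  (2 <= m)%N -> (s' <= r')%N -> (r' <= m')%N -> (r' = 0 -> m' = 0)%N ->
  \sum_(t <- iota (maxn 1 r') (m'.+2 - maxn 1 r')) ((m' + (s' < t)%N)%N == m)%:R * a ^+ t
  = ((m' == m) && (s' == r'))%:R * a ^+ r' + ((m' == m.-1) && (s' < r')%N)%:R * a ^+ r'
    + (m' == m.-1)%:R * \sum_(t <- iota r'.+1 (m - r')) a ^+ t.
Proof.
move=> Hm Hsr Hrm Hr0.
have [Hr|Hr] : r' = 0%N \/ (0 < r')%N by case: (r'); [left|right].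
  subst r'; rewrite Hr0 //; move: Hsr; rewrite leqn0 => /eqP ->.
  have -> : iota (maxn 1 0) (2 - maxn 1 0) = [:: 1%N] by [].
  rewrite big_cons big_nil /=.
  by case: m Hm => [|[|[|m]]] //= _; rewrite !mul0r !addr0.
rewrite (maxn_idPr Hr).
have -> : (m'.+2 - r' = (m'.+1 - r').+1)%N by rewrite subSn // leqW.
rewrite /= big_cons.
have -> : \sum_(t <- iota r'.+1 (m'.+1 - r')) ((m' + (s' < t)%N)%N == m)%:R * a ^+ t
   = (m'.+1 == m)%:R * \sum_(t <- iota r'.+1 (m'.+1 - r')) a ^+ t.
  rewrite mulr_sumr; apply: eq_big_seq => t; rewrite mem_iota => /andP [Ht _].
  by rewrite (leq_ltn_trans Hsr Ht) addn1.
have Em : (m'.+1 == m) = (m' == m.-1) by case: m Hm.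
congr (_ + _); last first.
  rewrite Em; case: (eqVneq m' m.-1) => [E|_]; last by rewrite /= !mul0r.
  by rewrite E prednK // (leq_trans _ Hm).
case: (ltngtP s' r') => Hs.
- by rewrite addn1 Em andbF andbT /= mul0r add0r.
- by move: Hsr; rewrite leqNgt Hs.
- by rewrite addn0 andbT andbF /= mul0r addr0.
Qed.

Lemma geom (R : comRingType) (a : R) r d :
  (1 - a) * \sum_(t <- iota r.+1 d) a ^+ t = a ^+ r.+1 - a ^+ (r.+1 + d).
Proof.
elim: d r => [|d IH] r; first by rewrite big_nil mulr0 addn0 subrr.
rewrite /= big_cons mulrDr IH addnS -addSn !exprS; ring.
Qed.

Lemma geomE (R : fieldType) (a : R) r m : 1 - a != 0 -> (r < m)%N ->
  \sum_(t <- iota r.+1 (m - r)) a ^+ t = a / (1 - a) * (a ^+ r - a ^+ m).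
Proof.
move=> Ha Hr.
have H := geom _ a r (m - r).
rewrite addSn subnKC ?(ltnW Hr) // in H.
apply: (mulfI Ha); rewrite H !exprS; field.
exact: Ha.
Qed.

Lemma Vfacts k y : y \in V k.+1 ->
  [/\ y != [::], valid y, (last 0 y <= mx y)%N, (mx y <= asc y)%N & (mx y = 0 -> asc y = 0)%N].
Proof.
rewrite memV => /andP [Hv _]; split => //.
- exact: valid_ne.
- exact: last_le_mx.
- by case/andP: Hv => /mx_le_asc.
- exact: mx0_asc.
Qed.

Lemma shiftA (R : comRingType) k m (a : R) : (1 <= m)%N ->
  \sum_(z <- V k.+1) (asc z == m)%:R * (1 ^+ last 0 z * a ^+ mx z) =
  \sum_(y <- V k.+2) ((asc y == m) && (last 0 y < mx y)%N)%:R * a ^+ mx y.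
Proof.
move=> Hm; rewrite sumV_rec; apply: eq_big_seq => z Hz.
have [Hne Hv Hl Hma Hm0] := Vfacts _ _ Hz.
rewrite big1_seq ?addr0; last first.
  move=> t /andP [_]; rewrite mem_iota => /andP [Ht _].
  have Ht' : (mx z <= t)%N by apply: leq_trans _ Ht; rewrite leq_maxr.
  by rewrite mx_rcons last_rcons (maxn_idPr Ht') ltnn andbF mul0r.
rewrite asc_rcons // mx_rcons last_rcons maxn0 ltn0 addn0 expr1n mul1r.
case: (eqVneq (asc z) m) => Ha //=.
rewrite lt0n; case: (eqVneq (mx z) 0) => // E.
by move: Hm; rewrite -Ha Hm0.
Qed.

Lemma A0 (R : comRingType) n m (u v : R) : (n <= m)%N -> A_ev n m u v = 0.
Proof. by move=> H; rewrite /A_ev ltnNge H. Qed.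

Lemma B0 (R : comRingType) n m (v : R) : (n <= m)%N -> B_ev n m v = 0.
Proof. by move=> H; rewrite /B_ev ltnNge H. Qed.

Lemma iota_rcons_A (R : comRingType) y (u v : R) m d : y != [::] ->
  \sum_(t <- iota (maxn 1 (mx y)) d)
     (asc (rcons y t) == m)%:R * (u ^+ last 0 (rcons y t) * v ^+ mx (rcons y t))
  = \sum_(t <- iota (maxn 1 (mx y)) d) ((asc y + (last 0 y < t)%N)%N == m)%:R * (u * v) ^+ t.
Proof.
move=> Hne; apply: eq_big_seq => t; rewrite mem_iota => /andP [Ht _].
have Ht' : (mx y <= t)%N by apply: leq_trans _ Ht; rewrite leq_maxr.
by rewrite asc_rcons // mx_rcons last_rcons (maxn_idPr Ht') exprMn.
Qed.

Lemma iota_rcons_B (R : comRingType) y (v : R) m d : y != [::] ->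
  \sum_(t <- iota (maxn 1 (mx y)) d)
     ((asc (rcons y t) == m) && (last 0 (rcons y t) == mx (rcons y t)))%:R * v ^+ mx (rcons y t)
  = \sum_(t <- iota (maxn 1 (mx y)) d) ((asc y + (last 0 y < t)%N)%N == m)%:R * v ^+ t.
Proof.
move=> Hne; apply: eq_big_seq => t; rewrite mem_iota => /andP [Ht _].
have Ht' : (mx y <= t)%N by apply: leq_trans _ Ht; rewrite leq_maxr.
by rewrite asc_rcons // mx_rcons last_rcons (maxn_idPr Ht') eqxx andbT.
Qed.

Theorem lemma2 (R : fieldType) (n m : nat) (u v : R) :
  (2 <= m)%N ->
  (u * v != 1 ->
     A_ev n m u v =
       B_ev n.-1 m (u * v) + A_ev n.-1 m 1 v + A_ev n.-2 m.-1 1 (u * v)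
       + (u * v) / (1 - u * v) *
         (A_ev n.-1 m.-1 1 (u * v) - (u * v) ^+ m * A_ev n.-1 m.-1 1 1)) /\
  (v != 1 ->
     B_ev n m v =
       B_ev n.-1 m v + A_ev n.-2 m.-1 1 v
       + v / (1 - v) * (A_ev n.-1 m.-1 1 v - v ^+ m * A_ev n.-1 m.-1 1 1)).
Proof.
move=> Hm.
have Hm1 : (1 <= m.-1)%N by case: m Hm => [|[|m]].
case: n => [|[|[|k]]] /=.
- by split => _; rewrite !A0 ?B0 // mulr0 subrr mulr0 !addr0.
- by split => _; rewrite !A0 ?B0 // ?mulr0 ?subrr ?mulr0 ?addr0 //; lia.
- by split => _; rewrite !A0 ?B0 // ?mulr0 ?subrr ?mulr0 ?addr0 //; lia.
split => Huv.
  have Hc : 1 - u * v != 0 by rewrite subr_eq0 eq_sym.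
  rewrite !A_W B_W (sumV_rec _ k.+1) (shiftA _ k m.-1 (u * v) Hm1).
  rewrite [(u * v) ^+ m * _]mulr_sumr -sumrB mulr_sumr -!big_split.
  apply: eq_big_seq => y Hy.
  have [Hne Hv Hl Hma Hm0] := Vfacts _ _ Hy.
  rewrite iota_rcons_A // asc_rcons // mx_rcons last_rcons maxn0 ltn0 addn0 expr0 mul1r.
  rewrite (per_y _ _ _ _ _ _ Hm Hl Hma Hm0) !expr1n !mul1r.
  case: (eqVneq (asc y) m.-1) => E /=.
    rewrite (geomE _ _ _ _ Hc); last by rewrite (leq_ltn_trans Hma) // E ltn_predL (leq_trans _ Hm).
    rewrite !mul1r; ring.
  rewrite !mul0r; ring.
have Hc : 1 - v != 0 by rewrite subr_eq0 eq_sym.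
rewrite !B_W !A_W (sumV_rec _ k.+1) (shiftA _ k m.-1 v Hm1).
rewrite [v ^+ m * _]mulr_sumr -sumrB mulr_sumr -!big_split.
apply: eq_big_seq => y Hy.
have [Hne Hv Hl Hma Hm0] := Vfacts _ _ Hy.
rewrite iota_rcons_B // asc_rcons // mx_rcons last_rcons maxn0 ltn0 addn0.
have -> : ((asc y == m) && (0 == mx y)) = false.
  apply/negbTE/negP => /andP [/eqP E1 /eqP E2].
  by move: Hm; rewrite -E1 Hm0.
rewrite /= mul0r add0r.
rewrite (per_y _ _ _ _ _ _ Hm Hl Hma Hm0) !expr1n !mul1r.
case: (eqVneq (asc y) m.-1) => E /=.
  rewrite (geomE _ _ _ _ Hc); last by rewrite (leq_ltn_trans Hma) // E ltn_predL (leq_trans _ Hm).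
  rewrite !mul1r; ring.
rewrite !mul0r; ring.
Qed.
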